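(* Let $\Sigma$ be a finite alphabet and let $X,Y\subseteq\Sigma^{\mathbb{Z}}$ be constrained systems. Suppose that $X$ is primitive or $Y$ is primitive. Then the sequence $\left(\frac{1}{n}R(\mathscr{B}_n(X),\mathscr{B}_n(Y))\right)_{n\in\mathbb{N}}$ converges; that is, \[R(X,Y)=\lim_{n\to\infty}\frac{R(\mathscr{B}_n(X),\mathscr{B}_n(Y))}{n}.\]
   Context: $\Sigma^{\mathbb{Z}}$ carries the product topology (discrete on $\Sigma$) and the shift $T$, $(T\mathbf{x})_n=\mathbf{x}_{n+1}$. A constrained system is a set $X\subseteq\Sigma^{\mathbb{Z}}$ for which there is a finite directed graph $G=(V,E)$ with a labeling $L:E\to\Sigma$ such that $X$ is the set of label sequences $(L(e_i))_{i\in\mathbb{Z}}$ of bi-infinite directed paths $(e_i)_{i\in\mathbb{Z}}$ in $G$. A labeled graph is irreducible if any two vertices are joined by a directed path, and primitive if it is irreducible and the gcd of its cycle lengths is $1$ (equivalently, there is $n$ such that any two vertices are joined by a directed path of length exactly $n$). $X$ is primitive if it is presented by some primitive labeled graph. The language $\mathscr{B}_n(X)\subseteq\Sigma^n$ is the set of length-$n$ words appearing as consecutive subwords of some element of $X$. For $\overline{u},\overline{v}\in\Sigma^n$, $d(\overline{u},\overline{v})$ is the Hamming distance. For $A,C\subseteq\Sigma^n$, $R(C,A)=\max_{\overline{y}\in A}\min_{\overline{x}\in C}d(\overline{x},\overline{y})$. For shift spaces $X,Y$, $R(X,Y)=\liminf_{n\to\infty}\frac{1}{n}R(\mathscr{B}_n(X),\mathscr{B}_n(Y))$.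 *)

(* Defs.v *)
From Stdlib Require Import Reals.
From Coquelicot Require Import Coquelicot.
From mathcomp Require Import all_boot all_order all_algebra.
From mathcomp Require Import boolp.

Set Implicit Arguments.
Unset Strict Implicit.
Unset Printing Implicit Defensive.

Definition zseq (S : finType) := int -> S.

Record lgraph (S : finType) := LGraph {
  gV : finType;
  gE : finType;
  gsrc : gE -> gV;
  gtgt : gE -> gV;
  glab : gE -> S }.

Fixpoint walk (S : finType) (G : lgraph S) (u v : gV G) (s : seq (gE G)) : Prop :=
  match s with
  | [::] => u = v
  | e :: s' => gsrc e = u /\ walk (gtgt e) v s'
  end.

Definition irreducible_graph (S : finType) (G : lgraph S) : Prop :=
  forall u v : gV G, exists s, walk u v s.

(* primitive: irreducible and the gcd of the cycle lengths is 1, i.e. the only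
   natural number dividing all cycle lengths is 1. *)
Definition primitive_graph (S : finType) (G : lgraph S) : Prop :=
  irreducible_graph G /\
  forall d : nat,
    (forall (u : gV G) (s : seq (gE G)), walk u u s -> (0 < size s)%N ->
        (d %| size s)%N) ->
    d = 1%N.

Definition presents (S : finType) (G : lgraph S) (X : zseq S -> Prop) : Prop :=
  forall x : zseq S,
    X x <-> exists e : int -> gE G,
      (forall i : int, gtgt (e i) = gsrc (e (i + 1)%R)) /\
      (forall i : int, x i = glab (e i)).

Definition constrained_system (S : finType) (X : zseq S -> Prop) : Prop :=
  exists G : lgraph S, presents G X.

Definition primitive_system (S : finType) (X : zseq S -> Prop) : Prop :=
  exists G : lgraph S, primitive_graph G /\ presents G X.

Definition lang (S : finType) (X : zseq S -> Prop) (n : nat) : {set n.-tuple S} :=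
  [set w : n.-tuple S | `[< exists x : zseq S, X x /\ exists i : int,
        forall k : 'I_n, tnth w k = x (i + (nat_of_ord k)%:Z)%R >] ].

Definition hamming (S : finType) (n : nat) (u v : n.-tuple S) : nat :=
  \sum_(k < n) (tnth u k != tnth v k).

(* R(C,A) = max_{y in A} min_{x in C} d(x,y); empty max is 0, empty min is n. *)
Definition covR (S : finType) (n : nat) (C A : {set n.-tuple S}) : nat :=
  \max_(y in A) \big[minn/n]_(x in C) hamming x y.

Definition covR_seq (S : finType) (X Y : zseq S -> Prop) (n : nat) : R :=
  Rdiv (INR (covR (lang X n) (lang Y n))) (INR n).

Definition covR_sys (S : finType) (X Y : zseq S -> Prop) : Rbar :=
  LimInf_seq (covR_seq X Y).

(* Main.v *)
Require Import Defs.
From Stdlib Require Import Reals.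
From Coquelicot Require Import Coquelicot.
From mathcomp Require Import all_boot all_order all_algebra.
From mathcomp Require Import boolp.
From Stdlib Require Import Lra.
From mathcomp Require Import zify.

Set Implicit Arguments.
Unset Strict Implicit.
Unset Printing Implicit Defensive.
Import GRing.Theory.


Section Walks.
Variables (S : finType) (G : lgraph S).

Lemma walk_cat (u v w : gV G) s t : walk u v s -> walk v w t -> walk u w (s ++ t).
Proof.
elim: s u => [|e s IH] u /=; first by move=> -> .
by move=> [h1 h2] ht; split=> //; apply: IH.
Qed.

Lemma walk_rcons (u v : gV G) s e : walk u v s -> gsrc e = v -> walk u (gtgt e) (rcons s e).
Proof.
elim: s u => [|e' s IH] u /=; first by move=> ->.
by move=> [h1 h2] he; split=> //; apply: IH.
Qed.

Lemma walk_rcons_inv (u v : gV G) s e : walk u v (rcons s e) -> gtgt e = v.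
Proof.
elim: s u => [|e' s IH] u /=; first by move=> [_ ->].
by move=> [_ h]; apply: IH h.
Qed.

Fixpoint app (w : seq (gE G)) (r : nat -> gE G) (k : nat) : gE G :=
  match w with
  | [::] => r k
  | e :: w' => match k with 0 => e | k'.+1 => app w' r k' end
  end.

Definition okR (r : nat -> gE G) := forall n, gtgt (r n) = gsrc (r n.+1).
Definition okL (l : nat -> gE G) := forall n, gtgt (l n.+1) = gsrc (l n).

Lemma app_walk (p q : gV G) w r : walk p q w -> okR r -> gsrc (r 0%N) = q ->
  okR (app w r) /\ gsrc (app w r 0%N) = p.
Proof.
elim: w p => [|e w IH] p /=; first by move=> -> hr hq; split.
move=> [h1 h2] hr hq; have [IH1 IH2] := IH _ h2 hr hq.
split=> //; case=> [|k] //=.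
Qed.

Lemma app_nth w r k d : (k < size w)%N -> app w r k = nth d w k.
Proof. by elim: w k => [|e w IH] [|k] //= /IH. Qed.

End Walks.



Definition inL (S : finType) (X : zseq S -> Prop) (s : seq S) :=
  exists x, X x /\ exists i : int, s = mkseq (fun k => x (i + k%:Z)%R) (size s).

Section Glue.
Variables (S : finType) (G : lgraph S) (X : zseq S -> Prop).
Hypothesis HG : presents G X.

Lemma glue_in l r (p q : gV G) w : okL l -> okR r -> walk p q w ->
  gtgt (l 0%N) = p -> gsrc (r 0%N) = q -> inL X (map (@glab S G) w).
Proof.
move=> hl hr hw hp hq.
have [ha ha0] := app_walk hw hr hq.
pose e := fun z : int => match z with Posz n => app w r n | Negz n => l n end.
have he : forall i : int, gtgt (e i) = gsrc (e (i + 1)%R).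
  case=> n.
    have -> : (Posz n + 1 = Posz n.+1)%R by lia.
    exact: ha.
  case: n => [|n].
    have -> : (Negz 0 + 1 = Posz 0)%R by lia.
    by rewrite /= ha0.
  have -> : (Negz n.+1 + 1 = Negz n)%R by lia.
  exact: hl.
exists (fun z => glab (e z)); split.
  by apply/HG; exists e.
exists 0%R.
apply: (@eq_from_nth _ (glab (r 0%N))); first by rewrite size_map size_mkseq.
move=> k; rewrite size_map => hk.
rewrite (nth_map (r 0%N)) // nth_mkseq // add0r /=.
by rewrite -(app_nth r _ hk).
Qed.

Lemma extract s : inL X s -> exists l r (p q : gV G) w,
  [/\ okL l, okR r, walk p q w, gtgt (l 0%N) = p & gsrc (r 0%N) = q] /\
      map (@glab S G) w = s.
Proof.
move=> [x [/HG [e [he hx]] [i hs]]].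
exists (fun n => e (i - (n.+1)%:Z)%R), (fun n => e (i + (size s + n)%:Z)%R).
exists (gsrc (e i)), (gsrc (e (i + (size s)%:Z)%R)).
exists (mkseq (fun k => e (i + k%:Z)%R) (size s)).
split; [split|].
- move=> n /=; rewrite he; congr (gsrc (e _)); lia.
- move=> n /=; rewrite he; congr (gsrc (e _)); lia.
- elim: (size s) => [|m IH]; first by rewrite /= addr0.
  rewrite mkseqS; have -> : (i + m.+1%:Z = i + m%:Z + 1)%R by lia.
  rewrite -he; apply: walk_rcons IH _; by [].
- rewrite he; congr (gsrc (e _)); lia.
- congr (gsrc (e _)); lia.
- rewrite hs size_mkseq /mkseq -map_comp; apply: eq_map => k /=.
  by rewrite hx.
Qed.

End Glue.



Lemma numsemi (A : nat -> Prop) : A 0%N -> (forall a b, A a -> A b -> A (a + b)%N) ->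
  (exists a, A a /\ (0 < a)%N) -> (forall d, (forall a, A a -> (d %| a)%N) -> d = 1%N) ->
  exists T, forall t, (T <= t)%N -> A t.
Proof.
move=> A0 Aadd [a [Aa apos]] Hd.
have Amul : forall q b, A b -> A (q * b)%N.
  by elim=> [|q IH] b Ab; rewrite ?mul0n // mulSn; apply: Aadd => //; apply: IH.
pose P d := `[< (0 < d)%N /\ exists b, A b /\ A (b + d)%N >].
have exP : exists d, P d by exists a; apply/asboolP; split=> //; exists 0%N.
case: (ex_minnP exP) => d0 /asboolP [d0pos [a1 [Aa1 Aa1d]]] mind0.
have div : forall b, A b -> (d0 %| b)%N.
  move=> b Ab; rewrite /dvdn; apply/eqP.
  set q := (b %/ d0)%N; set r := (b %% d0)%N.
  have hb : b = (q * d0 + r)%N by rewrite /q /r -divn_eq.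
  have rlt : (r < d0)%N by rewrite /r ltn_pmod.
  case: (posnP r) => // rpos.
  have : P r.
    apply/asboolP; split=> //; exists (q * (a1 + d0))%N; split; first exact: Amul.
    have -> : (q * (a1 + d0) + r = b + q * a1)%N by rewrite hb mulnDr; lia.
    by apply: Aadd => //; apply: Amul.
  by move/mind0; rewrite leqNgt rlt.
have d01 : d0 = 1%N by apply: Hd.
rewrite d01 in Aa1d.
exists (a1 * a1)%N => t ht.
case: (posnP a1) => [a10|a1pos].
  rewrite a10 /= in Aa1d; rewrite -(muln1 t); exact: Amul.
set q := (t %/ a1)%N; set r := (t %% a1)%N.
have ht' : t = (q * a1 + r)%N by rewrite /q /r -divn_eq.
have rlt : (r < a1)%N by rewrite /r ltn_pmod.
have qge : (a1 <= q)%N by rewrite /q leq_divRL.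
have -> : t = ((q - r) * a1 + r * (a1 + 1))%N.
  rewrite ht' mulnBl mulnDr muln1.
  have : (r * a1 <= q * a1)%N by rewrite leq_mul2r; apply/orP; right; lia.
  lia.
by apply: Aadd; apply: Amul.
Qed.

Section Prim.
Variables (S : finType) (G : lgraph S).

Lemma prim_cycle : primitive_graph G -> exists (u : gV G) c, walk u u c /\ (0 < size c)%N.
Proof.
move=> [_ Hd]; apply: contrapT => hn.
have : 2%N = 1%N; last by [].
apply: Hd => u s hs hpos; exfalso; apply: hn; by exists u, s.
Qed.

Lemma prim_N : primitive_graph G ->
  exists N, forall p q : gV G, exists w, walk p q w /\ size w = N.
Proof.
move=> HP; have [u0 [c [hc cpos]]] := prim_cycle HP; case: HP => Hirr Hd.
pose A a := exists s, walk u0 u0 s /\ size s = a.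
have [T HT] : exists T, forall t, (T <= t)%N -> A t.
  apply: numsemi.
  - by exists [::].
  - move=> a b [s [hs <-]] [t [ht <-]]; exists (s ++ t); split; last exact: size_cat.
    exact: walk_cat hs ht.
  - by exists (size c); split=> //; exists c.
  - move=> d hd; apply: Hd => u s hs hpos.
    have [s1 h1] := Hirr u0 u; have [s2 h2] := Hirr u u0.
    have d1 : (d %| size s1 + size s2)%N.
      apply: hd; exists (s1 ++ s2); rewrite size_cat; split=> //; exact: walk_cat h1 h2.
    have d2 : (d %| (size s1 + size s2) + size s)%N.
      apply: hd; exists (s1 ++ s ++ s2); rewrite !size_cat; split; last lia.
      apply: walk_cat h1 _; exact: walk_cat hs h2.
    by rewrite (dvdn_addr _ d1) in d2.
have [f hf] := boolp.choice (fun p => Hirr p u0).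
have [g hg] := boolp.choice (fun q => Hirr u0 q).
pose K1 := (\max_p size (f p))%N; pose K2 := (\max_q size (g q))%N.
exists (T + K1 + K2)%N => p q.
have hp : (size (f p) <= K1)%N by apply: (leq_bigmax p).
have hq : (size (g q) <= K2)%N by apply: (leq_bigmax q).
have [s [hs hsz]] := HT (T + K1 + K2 - size (f p) - size (g q))%N ltac:(lia).
exists (f p ++ s ++ g q); split.
  apply: walk_cat (hf p) _; exact: walk_cat hs (hg q).
rewrite !size_cat hsz; lia.
Qed.

Lemma prim_nonempty (X : zseq S -> Prop) : presents G X -> primitive_graph G ->
  exists x, X x.
Proof.
move=> HG HP; have [u0 [c [hc cpos]]] := prim_cycle HP; case: HP => Hirr _.
have hout : forall v : gV G, exists e : gE G, gsrc e = v.
  move=> v; have [s hs] := Hirr v u0.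
  have := walk_cat hs hc.
  case E: (s ++ c) => [|e t]; last by move=> [h _]; exists e.
  by move: (congr1 size E); rewrite size_cat /=; lia.
have hin : forall v : gV G, exists e : gE G, gtgt e = v.
  move=> v; have [s hs] := Hirr u0 v.
  have := walk_cat hc hs.
  case/lastP E: (c ++ s) => [|t e]; last by move/walk_rcons_inv; exists e.
  by move: (congr1 size E); rewrite size_cat /=; lia.
have [out hout'] := boolp.choice hout.
have [inn hin'] := boolp.choice hin.
pose r n := iter n (fun e => out (gtgt e)) (out u0).
pose l n := iter n (fun e => inn (gsrc e)) (inn u0).
have := @glue_in S G X HG l r u0 u0 [::].
case=> //.
- by move=> n; rewrite /l iterS hin'.
- by move=> n; rewrite /r iterS hout'.
- by rewrite /l /= hin'.
- by rewrite /r /= hout'.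
move=> x [Xx _]; by exists x.
Qed.

Lemma prim_glue (X : zseq S -> Prop) : presents G X -> primitive_graph G ->
  exists N, forall s1 s2, inL X s1 -> inL X s2 ->
    exists w, size w = N /\ inL X (s1 ++ w ++ s2).
Proof.
move=> HG HP; have [N HN] := prim_N HP; exists N => s1 s2 h1 h2.
have [l1 [r1 [p1 [q1 [w1 [[hl1 hr1 hw1 hp1 hq1] hm1]]]]]] := extract HG h1.
have [l2 [r2 [p2 [q2 [w2 [[hl2 hr2 hw2 hp2 hq2] hm2]]]]]] := extract HG h2.
have [ww [hww hsz]] := HN q1 p2.
exists (map (@glab S G) ww); split; first by rewrite size_map.
rewrite -hm1 -hm2 -!map_cat.
apply: (glue_in HG hl1 hr2 _ hp1 hq2).
apply: walk_cat hw1 _; exact: walk_cat hww hw2.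
Qed.

End Prim.



Section Words.
Variable S : finType.

Definition hd (s t : seq S) : nat := (\sum_(p <- zip s t) (p.1 != p.2))%N.

Lemma hamming_hd n (u v : n.-tuple S) : hamming u v = hd u v.
Proof.
rewrite /hamming /hd -(map_tnth_enum u) -(map_tnth_enum v) zip_map big_map.
by rewrite big_enum.
Qed.

Lemma hd_cat s1 s2 t1 t2 : size s1 = size t1 ->
  hd (s1 ++ s2) (t1 ++ t2) = (hd s1 t1 + hd s2 t2)%N.
Proof. by move=> h; rewrite /hd zip_cat // big_cat. Qed.

Lemma hd_le s t : (hd s t <= size s)%N.
Proof.
rewrite /hd; apply: (@leq_trans (\sum_(p <- zip s t) 1)%N).
  by apply: leq_sum => p _; case: (_ != _).
by rewrite sum1_size size_zip geq_minl.
Qed.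

Lemma hd_take m s t : size s = size t -> (hd (take m s) (take m t) <= hd s t)%N.
Proof.
move=> h; rewrite -{2}(cat_take_drop m s) -{2}(cat_take_drop m t) hd_cat ?leq_addr //.
by rewrite !size_take h.
Qed.

Lemma hd_rcons s t a b : size s = size t -> (hd (rcons s a) (rcons t b) <= hd s t + 1)%N.
Proof.
move=> h; rewrite -!cats1 hd_cat // leq_add2l.
by apply: leq_trans (hd_le _ _) _.
Qed.

Variable X : zseq S -> Prop.

Lemma mkseq_add (f : nat -> S) m n :
  mkseq f (m + n) = mkseq f m ++ mkseq (fun k => f (m + k)%N) n.
Proof.
rewrite /mkseq iotaD map_cat; congr (_ ++ _).
by rewrite add0n -{1}(addn0 m) iotaDl -map_comp.
Qed.

Lemma inL_cat s1 s2 : inL X (s1 ++ s2) -> inL X s1 /\ inL X s2.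
Proof.
move=> [x [Xx [i hs]]]; rewrite size_cat mkseq_add in hs.
move/eqP: hs; rewrite eqseq_cat ?size_mkseq // => /andP [/eqP h1 /eqP h2].
split; exists x; split=> //.
  by exists i.
exists (i + (size s1)%:Z)%R; rewrite {1}h2; congr mkseq; apply: boolp.funext => k.
by rewrite PoszD addrA.
Qed.

Lemma inL_ext s : inL X s -> exists a, inL X (rcons s a).
Proof.
move=> [x [Xx [i hs]]]; exists (x (i + (size s)%:Z)%R); exists x; split=> //.
by exists i; rewrite size_rcons mkseqS -hs.
Qed.

Lemma inL_of x : X x -> forall n, exists s, size s = n /\ inL X s.
Proof.
move=> Xx n; exists (mkseq (fun k => x (0 + k%:Z)%R) n); rewrite size_mkseq.
by split=> //; exists x; split=> //; exists 0%R; rewrite size_mkseq.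
Qed.

Lemma lang_inL n (t : n.-tuple S) : t \in lang X n <-> inL X t.
Proof.
rewrite /lang inE; split.
  move/asboolP=> [x [Xx [i hi]]]; exists x; split=> //; exists i.
  rewrite size_tuple -(map_tnth_enum t) /mkseq -val_enum_ord -map_comp.
  by apply: eq_map => k /=; rewrite hi.
move=> [x [Xx [i hi]]]; apply/asboolP; exists x; split=> //; exists i => k.
rewrite (tnth_nth (tnth t k)) hi nth_mkseq //.
by rewrite size_tuple.
Qed.

End Words.



Section Cov.
Variables (S : finType) (n : nat).
Implicit Types (C A : {set n.-tuple S}).

Lemma bigmin_le_seq (F : n.-tuple S -> nat) (s : seq (n.-tuple S)) x :
  x \in s -> (\big[minn/n]_(i <- s) F i <= F x)%N.
Proof.
elim: s => [|a s IH] //; rewrite inE big_cons => /orP [/eqP ->|/IH h].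
  exact: geq_minl.
by rewrite geq_min h orbT.
Qed.

Lemma bigmin_le (F : n.-tuple S -> nat) C x : x \in C ->
  (\big[minn/n]_(i in C) F i <= F x)%N.
Proof. by move=> hx; rewrite -big_filter; apply: bigmin_le_seq; rewrite mem_filter mem_index_enum hx. Qed.

Lemma bigmin_len (F : n.-tuple S -> nat) C : (\big[minn/n]_(i in C) F i <= n)%N.
Proof. by elim/big_rec: _ => // i x _ h; rewrite geq_min h orbT. Qed.

Lemma bigmin_ge (F : n.-tuple S -> nat) C r : (forall x, x \in C -> r <= F x)%N ->
  (r <= n)%N -> (r <= \big[minn/n]_(i in C) F i)%N.
Proof. by move=> h hr; elim/big_rec: _ => // i x hi hx; rewrite leq_min h. Qed.

Lemma covR_len C A : (covR C A <= n)%N.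
Proof. by rewrite /covR; elim/big_rec: _ => // i x _ h; rewrite geq_max h bigmin_len. Qed.

Lemma covR_lower C A y r : y \in A -> (forall x, x \in C -> r <= hamming x y)%N ->
  (r <= n)%N -> (r <= covR C A)%N.
Proof.
move=> hy hx hr; apply: leq_trans (bigmin_ge hx hr) _.
rewrite /covR; exact: (@leq_bigmax_cond _ (mem A) (fun y => \big[minn/n]_(x in C) hamming x y) y hy).
Qed.

Lemma covR_upper C A r :
  (forall y, y \in A -> (n <= r)%N \/ exists2 x, x \in C & (hamming x y <= r)%N) ->
  (covR C A <= r)%N.
Proof.
move=> h; rewrite /covR; elim/big_rec: _ => // i x hi hx; rewrite geq_max hx andbT.
case: (h i hi) => [hn|[z hz hzr]].
  exact: leq_trans (bigmin_len _ _) hn.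
exact: leq_trans (bigmin_le _ hz) hzr.
Qed.

Lemma covR_close C A y : y \in A ->
  (n <= covR C A)%N \/ exists2 x, x \in C & (hamming x y <= covR C A)%N.
Proof.
move=> hy; case: (boolp.pselect (exists2 x, x \in C & (hamming x y <= covR C A)%N)) => hex;
  [by right|left].
have : (minn n (covR C A).+1 <= covR C A)%N.
  apply: covR_lower hy _ (geq_minl _ _) => x hx.
  rewrite geq_min; apply/orP; right; rewrite ltnNge; apply/negP => hle.
  by apply: hex; exists x.
by rewrite geq_min ltnn orbF.
Qed.

Lemma covR_far C A : covR C A = 0%N \/
  exists2 y, y \in A & forall x, x \in C -> (covR C A <= hamming x y)%N.
Proof.
case: (boolp.pselect (exists2 y, y \in A & forall x, x \in C -> (covR C A <= hamming x y)%N))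
  => hex; [by right|left].
have : (covR C A <= (covR C A).-1)%N.
  apply: covR_upper => y hy; right.
  apply: contrapT => hn; apply: hex; exists y => // x hx.
  rewrite leqNgt; apply/negP => hlt; apply: hn; exists x => //; lia.
lia.
Qed.

End Cov.

Section SeqCov.
Variables (S : finType) (X Y : zseq S -> Prop).

Definition Rcov n := covR (lang X n) (lang Y n).

Definition mkT n (s : seq S) (H : size s = n) : n.-tuple S := @Tuple n S s (introT eqP H).

Lemma Rcov_len n : (Rcov n <= n)%N.
Proof. exact: covR_len. Qed.

Lemma sUpper n r :
  (forall y, size y = n -> inL Y y ->
     (n <= r)%N \/ exists x, [/\ size x = n, inL X x & (hd x y <= r)%N]) ->
  (Rcov n <= r)%N.
Proof.
move=> h; apply: covR_upper => y /lang_inL hy.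
case: (h y (size_tuple y) hy) => [|[x [hx1 hx2 hx3]]]; first by left.
right; exists (mkT hx1); first exact/lang_inL.
by rewrite hamming_hd.
Qed.

Lemma sLower n y r : size y = n -> inL Y y ->
  (forall x, size x = n -> inL X x -> r <= hd x y)%N -> (r <= n)%N -> (r <= Rcov n)%N.
Proof.
move=> hy1 hy2 hx hr; apply: (@covR_lower _ _ _ _ (mkT hy1)) => //.
  exact/lang_inL.
move=> x /lang_inL hxl; rewrite hamming_hd; apply: hx => //; exact: size_tuple.
Qed.

Lemma sClose n y : size y = n -> inL Y y ->
  (n <= Rcov n)%N \/ exists x, [/\ size x = n, inL X x & (hd x y <= Rcov n)%N].
Proof.
move=> hy1 hy2; have : mkT hy1 \in lang Y n by exact/lang_inL.
case/(covR_close (lang X n)) => [|[x /lang_inL hx hxr]]; first by left.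
by right; exists x; split=> //; [exact: size_tuple | move: hxr; rewrite hamming_hd].
Qed.

Lemma sFar n : Rcov n = 0%N \/
  exists y, [/\ size y = n, inL Y y &
     forall x, size x = n -> inL X x -> (Rcov n <= hd x y)%N].
Proof.
case: (covR_far (lang X n) (lang Y n)) => [|[y /lang_inL hy hx]]; first by left.
right; exists y; split=> //; first exact: size_tuple.
move=> x hx1 hx2; have := hx (mkT hx1); rewrite hamming_hd; apply; exact/lang_inL.
Qed.

Lemma Rcov_mono n : (Rcov n <= Rcov n.+1)%N.
Proof.
apply: sUpper => y hy1 hy2.
have [a ha] := inL_ext hy2.
have hs : size (rcons y a) = n.+1 by rewrite size_rcons hy1.
case: (sClose hs ha) => [h|[x [hx1 hx2 hx3]]].
  by left; apply: leq_trans (leqnSn n) h.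
right; exists (take n x); split.
- by rewrite size_take hx1 ltnSn.
- by case: (@inL_cat _ X (take n x) (drop n x)); rewrite ?cat_take_drop.
- apply: leq_trans hx3; have e : take n (rcons y a) = y by rewrite -cats1 (take_size_cat _ hy1).
  rewrite -{1}e.
  by apply: hd_take; rewrite hx1 hs.
Qed.

Lemma Rcov_lip n : (Rcov n.+1 <= Rcov n + 1)%N.
Proof.
apply: sUpper => y' hy1 hy2.
case/lastP E: y' hy1 hy2 => [|y a]; first by [].
rewrite size_rcons => -[hy1] hy2.
have := hy2; rewrite -cats1 => /inL_cat [hy _].
case: (sClose hy1 hy) => [h|[x [hx1 hx2 hx3]]]; first by left; lia.
have [b hb] := inL_ext hx2.
right; exists (rcons x b); split=> //; first by rewrite size_rcons hx1.
have hs : size x = size y by rewrite hx1 hy1.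
have := hd_rcons b a hs; rewrite cats1; lia.
Qed.

End SeqCov.



Section Ineq.
Variables (S : finType) (X Y : zseq S -> Prop).

Lemma Rcov_monole a b : (a <= b)%N -> (Rcov X Y a <= Rcov X Y b)%N.
Proof.
move=> hab; rewrite -(subnKC hab); elim: (b - a)%N => [|k IH]; first by rewrite addn0.
by apply: leq_trans IH _; rewrite addnS; apply: Rcov_mono.
Qed.

Lemma split3 (y : seq S) m N n : size y = (m + N + n)%N ->
  exists y1 y2 y3, [/\ y = y1 ++ y2 ++ y3, size y1 = m, size y2 = N & size y3 = n].
Proof.
move=> hy; exists (take m y), (take N (drop m y)), (drop N (drop m y)).
split; rewrite ?cat_take_drop //.
- by rewrite size_take; case: ifP; lia.
- by rewrite size_take size_drop; case: ifP; lia.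
- by rewrite !size_drop; lia.
Qed.

Lemma closeP n y : (exists x, X x) -> size y = n -> inL Y y ->
  exists x, [/\ size x = n, inL X x & (hd x y <= Rcov X Y n)%N].
Proof.
move=> [x0 Xx0] hy1 hy2; case: (sClose X hy1 hy2) => // h.
have [x [hx1 hx2]] := inL_of Xx0 n.
exists x; split=> //; apply: leq_trans h; rewrite -hx1; exact: hd_le.
Qed.

Lemma case1 (G : lgraph S) : presents G X -> primitive_graph G ->
  exists N, forall m n, (Rcov X Y (m + N + n) <= Rcov X Y m + Rcov X Y n + N)%N.
Proof.
move=> HG HP; have [N HN] := prim_glue HG HP; have hne := prim_nonempty HG HP.
exists N => m n; apply: sUpper => y hy1 hy2; right.
have [y1 [y2 [y3 [hy hs1 hs2 hs3]]]] := split3 hy1.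
rewrite hy in hy2; have [hy1' /inL_cat [_ hy3']] := inL_cat hy2.
have [x1 [hx1 hx1' hd1]] := closeP hne hs1 hy1'.
have [x3 [hx3 hx3' hd3]] := closeP hne hs3 hy3'.
have [w [hw hw']] := HN _ _ hx1' hx3'.
exists (x1 ++ w ++ x3); split=> //.

  by rewrite !size_cat hx1 hw hx3 addnA.
rewrite hy hd_cat ?hx1 ?hs1 // hd_cat ?hw ?hs2 //.
have := hd_le w y2; rewrite hw; lia.
Qed.

Lemma case2 (G : lgraph S) : presents G Y -> primitive_graph G ->
  exists N, forall m n, (Rcov X Y m + Rcov X Y n <= Rcov X Y (m + N + n))%N.
Proof.
move=> HG HP; have [N HN] := prim_glue HG HP.
exists N => m n.
case: (sFar X Y m) => [h0|[y1 [hs1 hy1 hf1]]].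
  by rewrite h0 add0n; apply: Rcov_monole; lia.
case: (sFar X Y n) => [h0|[y3 [hs3 hy3 hf3]]].
  by rewrite h0 addn0; apply: Rcov_monole; lia.
have [w [hw hw']] := HN _ _ hy1 hy3.
have hsz : size (y1 ++ w ++ y3) = (m + N + n)%N by rewrite !size_cat hs1 hw hs3 addnA.
apply: (sLower hsz hw').
- move=> x hx1 hx2.
  have [x1 [x2 [x3 [hx hs1' hs2' hs3']]]] := split3 hx1.
  rewrite hx in hx2; have [hx1' /inL_cat [_ hx3']] := inL_cat hx2.
  rewrite hx hd_cat ?hs1 ?hs1' // hd_cat ?hw ?hs2' //.
  have := hf1 _ hs1' hx1'; have := hf3 _ hs3' hx3'; lia.
- have := Rcov_len X Y m; have := Rcov_len X Y n; lia.
Qed.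

End Ineq.



Section Fek.
Local Open Scope R_scope.

Lemma INR_leq (a b : nat) : (a <= b)%N -> INR a <= INR b.
Proof. by move/leP; apply: le_INR. Qed.

Lemma fekete (b : nat -> nat) : (forall m n, b (m + n)%N <= b m + b n)%N ->
  exists L : R, is_lim_seq (fun n => INR (b n) / INR n) L.
Proof.
move=> hsub.
have bmul : forall q k r, (b (q * k + r) <= q * b k + b r)%N.
  elim=> [|q IH] k r; first by rewrite !mul0n !add0n.
  rewrite mulSn -addnA; apply: leq_trans (hsub _ _) _.
  have := IH k r; lia.
have br : forall r, (b r <= b 0%N + r * b 1%N)%N.
  elim=> [|r IH]; first by rewrite mul0n addn0.
  rewrite -addn1; apply: leq_trans (hsub _ _) _; lia.
pose u n := INR (b n) / INR n.
have upos : forall n, 0 <= u n.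
  move=> n; rewrite /u; case: n => [|n]; first by rewrite /= /Rdiv Rinv_0 Rmult_0_r; lra.
  apply: Rdiv_le_0_compat; [exact: pos_INR | apply: lt_0_INR; apply/ltP].
  by [].
pose E := fun x => exists n, x = - u n.+1.
have hb : bound E.
  by exists 0 => x [n ->]; have := upos n.+1; lra.
have [m [hm1 hm2]] := @completeness E hb (ex_intro _ (- u 1%N) (ex_intro _ 0%N erefl)).
pose L := - m.
have lower : forall n, (0 < n)%N -> L <= u n.
  move=> [|n] // _; have := hm1 _ (ex_intro _ n erefl); rewrite /L; lra.
have approx : forall eps, 0 < eps -> exists k, (0 < k)%N /\ u k < L + eps.
  move=> eps he; apply: Classical_Prop.NNPP => hn.
  have : m <= m - eps; last by lra.
  apply: hm2 => x [n ->].
  have : ~ (u n.+1 < L + eps) by move=> h; apply: hn; exists n.+1.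
  rewrite /L; lra.
exists L; apply/is_lim_seq_Reals => eps he.
have [k [kpos hk]] := approx (eps / 2) ltac:(lra).
pose M := (b 0%N + k * b 1%N)%N.
have [N1 hN1] := INR_archimed (eps / 2) (INR M) ltac:(lra).
exists (N1 + k)%N => n hn.
have hn' : (N1 + k <= n)%N by apply/leP.
have npos : (0 < n)%N by lia.
have key : (b n * k <= b k * n + M * k)%N.
  rewrite {1}(divn_eq n k).
  set q := (n %/ k)%N; set r := (n %% k)%N.
  have rlt : (r < k)%N by rewrite /r ltn_pmod.
  have h1 := bmul q k r.
  have h2 : (b r <= M)%N.
    apply: leq_trans (br r) _; rewrite /M leq_add2l leq_mul2r; apply/orP; right; lia.
  have h3 : (q * k <= n)%N by rewrite /q leq_divM.
  have : (b (q * k + r) * k <= (q * b k + M) * k)%N.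
    by rewrite leq_mul2r; apply/orP; right; apply: leq_trans h1 _; rewrite leq_add2l.
  rewrite mulnDl; move=> h4; apply: leq_trans h4 _; rewrite leq_add2r.
  by rewrite mulnAC mulnC leq_mul2l h3 orbT.
have keyR := INR_leq key; rewrite !plus_INR !mult_INR in keyR.
have hkR : 0 < INR k by apply: lt_0_INR; apply/ltP.
have hnR : 0 < INR n by apply: lt_0_INR; apply/ltP.
have hNn : INR N1 <= INR n by apply: INR_leq; lia.
have hMpos : 0 <= INR M by apply: pos_INR.
have hbn := pos_INR (b n).
have hbk := pos_INR (b k).
have hL := lower n npos.
have hun : u n <= u k + INR M / INR n.
  rewrite /u; apply: (Rmult_le_reg_r (INR n * INR k)); first by nra.
  have -> : INR (b n) / INR n * (INR n * INR k) = INR (b n) * INR k by field; lra.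
  have -> : (INR (b k) / INR k + INR M / INR n) * (INR n * INR k)
    = INR (b k) * INR n + INR M * INR k by field; lra.
  exact: keyR.
have hMn : INR M / INR n < eps / 2.
  apply: (Rmult_lt_reg_r (INR n)) => //.
  have -> : INR M / INR n * INR n = INR M by field; lra.
  nra.
change (R_dist (u n) L < eps).
rewrite /R_dist Rabs_right; [lra | lra].
Qed.

End Fek.



Section Final.
Local Open Scope R_scope.

Lemma lim_invn : is_lim_seq (fun n => / INR n) 0.
Proof.
have := is_lim_seq_inv _ _ is_lim_seq_INR ltac:(discriminate).
by [].
Qed.

Lemma lim_shift (b : nat -> nat) (c : nat) (L : R) :
  is_lim_seq (fun n => INR (b n) / INR n) L ->
  is_lim_seq (fun n => INR (b n) / INR n - INR c * / INR n) L.
Proof.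
move=> h.
have h2 := is_lim_seq_scal_l _ (INR c) _ lim_invn.
have := is_lim_seq_minus' _ _ _ _ h h2.
by rewrite /= Rmult_0_r Rminus_0_r.
Qed.

Lemma Rcov_lipn S (X Y : zseq S -> Prop) a k : (Rcov X Y (a + k) <= Rcov X Y a + k)%N.
Proof.
elim: k => [|k IH]; first by rewrite !addn0.
rewrite addnS; have := Rcov_lip X Y (a + k); lia.
Qed.

End Final.

Theorem proposition7 (S : finType) (X Y : zseq S -> Prop) :
  constrained_system X -> constrained_system Y ->
  (primitive_system X \/ primitive_system Y) ->
  ex_finite_lim_seq (covR_seq X Y) /\ covR_sys X Y = Lim_seq (covR_seq X Y).
Proof.
move=> _ _ hp.
suff : exists l : R, is_lim_seq (covR_seq X Y) l.
  move=> [l hl]; split; first by exists l.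
  rewrite /covR_sys (is_LimInf_seq_unique _ _ (is_lim_LimInf_seq _ _ hl)).
  by rewrite (is_lim_seq_unique _ _ hl).
case: hp => [[G [HP HG]]|[G [HP HG]]].
- have [N hN] := case1 Y HG HP.
  have hsub : forall m n, ((fun n => Rcov X Y n + N) (m + n) <=
      (fun n => Rcov X Y n + N) m + (fun n => Rcov X Y n + N) n)%N.
    move=> m n /=.
    have h2 := Rcov_monole X Y (_ : (m + n <= m + N + n)%N).
    have := hN m n; have := h2 ltac:(lia); lia.
  have [L hL] := fekete hsub.
  exists L; apply: is_lim_seq_ext (lim_shift N hL) => n.
  rewrite /covR_seq plus_INR /Rdiv; rewrite -/(Rcov X Y n); ring.
- have [N hN] := case2 X HG HP.
  pose Q n := (n - Rcov X Y n)%N.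
  have hsub : forall m n, ((fun n => Q n + N) (m + n) <=
      (fun n => Q n + N) m + (fun n => Q n + N) n)%N.
    move=> m n /=.
    have h1 := hN m n.
    have h2 := Rcov_lipn X Y (m + n) N.
    have h3 := Rcov_len X Y m; have h4 := Rcov_len X Y n; have h5 := Rcov_len X Y (m + N + n).
    have e : (m + n + N = m + N + n)%N by lia.
    rewrite e in h2; rewrite /Q; lia.
  have [L hL] := fekete hsub.
    exists (Rminus 1 L).
    have hL' := lim_shift N hL.
    have := is_lim_seq_minus' _ _ 1 L (is_lim_seq_const 1) hL'.
    apply: is_lim_seq_ext_loc; exists 1%N => n hn.
    have hn' : (0 < n)%N by apply/ltP.
    have hQ : (Q n + N + Rcov X Y n = n + N)%N by have := Rcov_len X Y n; rewrite /Q; lia.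
    have hQR : INR (Q n + N) = INR n + INR N - INR (Rcov X Y n).
      have : Rplus (INR (Q n + N)) (INR (Rcov X Y n)) = Rplus (INR n) (INR N).
        by rewrite -!plus_INR; congr INR; exact: hQ.
      lra.
    have hnR : INR n <> 0 by apply: not_0_INR; lia.
    rewrite /covR_seq hQR -/(Rcov X Y n); field; exact: hnR.
Qed.
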